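(* Let $0<s<r<1$ and let $P$ be a compact packing of the plane by discs of radii $1$, $r$, $s$. Then the coding of the corona of every $s$-disc of $P$ is, up to cyclic rotation and reversal, either $\mathrm{ssssss}$ or one of the following $55$ words: rrrrr, rrrrs, rrrss, rrsrs, rrrr, rrsss, rsrss, rrrs, rrr, rrss, 11111, 1111s, 111ss, 11s1s, 1111, 11sss, 1s1ss, 111s, 111, 11ss, 1111r, 111rs, 11rss, 11srs, 111r, 1rsss, 1srss, 11rs, 11r, 1rss, 111rr, 11r1s, 1r1ss, 1rs1s, 11rr, 1r1s, 1rr, 11r1r, 11rrs, 1rrss, 1rsrs, 1r1r, 1rrs, 11rrr, 1r1rs, r1rss, rrs1s, 1rrr, r1rs, 1r1rr, 1rr1s, 1rrrr, 1rrrs, r11rs, r1rrs.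
   Context: A packing is a set of discs in the plane with pairwise disjoint interiors; it is compact if its contact graph (centers as vertices, edges between tangent discs) is a triangulation of the plane. For $x\in\{1,r,s\}$, an $x$-disc is a disc of radius $x$. The corona of a disc $D$ in a compact packing is the set of discs tangent to $D$; its coding is the cyclic word over the alphabet $\{1,r,s\}$ obtained by listing the radii of these discs in angular order around $D$ (consecutive letters correspond to tangent discs). Codings are considered up to cyclic rotation and reversal. *)

(* Defs.v *)
From Stdlib Require Import Reals Lra List String Ascii.
Open Scope R_scope.

Inductive letter : Type := L1 | Lr | Ls.

Definition word := list letter.

Definition radius (r s : R) (a : letter) : R :=
  match a with L1 => 1 | Lr => r | Ls => s end.

Definition dist2 (p q : R * R) : R :=
  sqrt ((fst p - fst q) ^ 2 + (snd p - snd q) ^ 2).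

(** A family of discs indexed by [I]: disc [i] has center [c i] and
    radius [radius r s (k i)]. *)

Definition is_packing {I : Type} (r s : R) (c : I -> R * R) (k : I -> letter) : Prop :=
  forall i j, i <> j -> dist2 (c i) (c j) >= radius r s (k i) + radius r s (k j).

Definition tangent {I : Type} (r s : R) (c : I -> R * R) (k : I -> letter) (i j : I) : Prop :=
  i <> j /\ dist2 (c i) (c j) = radius r s (k i) + radius r s (k j).

(** [L] lists all discs tangent to disc [i], in counterclockwise angular
    order around [i]; consecutive discs (cyclically) are tangent, and each
    angular gap between consecutive neighbours is less than pi, so that the
    triangles (i, L_m, L_{m+1}) are faces of the contact graph filling a full
    turn around the center of [i]. *)
Definition is_corona {I : Type} (r s : R) (c : I -> R * R) (k : I -> letter)
    (i : I) (L : list I) : Prop :=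
  let n := List.length L in
  NoDup L /\
  (forall j, In j L <-> tangent r s c k i j) /\
  (forall m, (m < n)%nat ->
     tangent r s c k (nth m L i) (nth (S m mod n) L i)) /\
  exists th : nat -> R,
    (forall m, (m < n)%nat ->
       c (nth m L i) =
         (fst (c i) + (radius r s (k i) + radius r s (k (nth m L i))) * cos (th m),
          snd (c i) + (radius r s (k i) + radius r s (k (nth m L i))) * sin (th m))) /\
    (forall m, (S m < n)%nat -> th m < th (S m) < th m + PI) /\
    (0 < n)%nat /\
    th (pred n) < th O + 2 * PI < th (pred n) + PI.

(** Compact packing: every disc is surrounded by a full corona, i.e. the
    contact graph is a triangulation of the plane (local characterization). *)
Definition is_compact_packing {I : Type} (r s : R) (c : I -> R * R) (k : I -> letter) : Prop :=
  is_packing r s c k /\ forall i, exists L, is_corona r s c k i L.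

Definition coding {I : Type} (k : I -> letter) (L : list I) : word := map k L.

Definition rot (n : nat) (w : word) : word := skipn n w ++ firstn n w.

Definition cyc_equiv (w w' : word) : Prop :=
  exists n, rot n w = w' \/ rot n (rev w) = w'.

Fixpoint parse (str : string) : word :=
  match str with
  | EmptyString => nil
  | String a rest =>
      if Ascii.eqb a "1"%char then L1 :: parse rest
      else if Ascii.eqb a "r"%char then Lr :: parse rest
      else Ls :: parse rest
  end.

Definition allowed_words : list word :=
  map parse ("ssssss" ::
  "rrrrr" :: "rrrrs" :: "rrrss" :: "rrsrs" :: "rrrr" :: "rrsss" :: "rsrss" ::
  "rrrs" :: "rrr" :: "rrss" :: "11111" :: "1111s" :: "111ss" :: "11s1s" ::
  "1111" :: "11sss" :: "1s1ss" :: "111s" :: "111" :: "11ss" :: "1111r" ::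
  "111rs" :: "11rss" :: "11srs" :: "111r" :: "1rsss" :: "1srss" :: "11rs" ::
  "11r" :: "1rss" :: "111rr" :: "11r1s" :: "1r1ss" :: "1rs1s" :: "11rr" ::
  "1r1s" :: "1rr" :: "11r1r" :: "11rrs" :: "1rrss" :: "1rsrs" :: "1r1r" ::
  "1rrs" :: "11rrr" :: "1r1rs" :: "r1rss" :: "rrs1s" :: "1rrr" :: "r1rs" ::
  "1r1rr" :: "1rr1s" :: "1rrrr" :: "1rrrs" :: "r11rs" :: "r1rrs" :: nil)%string.

Lemma allowed_words_length : List.length allowed_words = 56%nat.
Proof. reflexivity. Qed.

(* Main.v *)
Require Import Defs.
From Stdlib Require Import Reals Lra Lia List.
Open Scope R_scope.

Definition letter_dec (a b : letter) : {a = b} + {a <> b}.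
Proof. decide equality. Defined.

Definition weqb (x y : word) : bool := if list_eq_dec letter_dec x y then true else false.

Definition cyc_in (w : word) : bool :=
  existsb (fun n => existsb (fun a => orb (weqb (rot n w) a) (weqb (rot n (rev w)) a)) allowed_words)
    (seq 0 (length w)).

Lemma cyc_in_sound w : cyc_in w = true -> exists w', In w' allowed_words /\ cyc_equiv w w'.
Proof.
  unfold cyc_in. intros H. apply existsb_exists in H as [n [_ H]].
  apply existsb_exists in H as [a [Ha H]].
  exists a. split; [exact Ha|]. exists n.
  apply Bool.orb_true_iff in H as [H|H]; unfold weqb in H;
  destruct (list_eq_dec letter_dec _ _); try discriminate; auto.
Qed.

Definition ssb (a b : letter) : bool := match a, b with Ls, Ls => true | _, _ => false end.
Definition ubn (a b : letter) : nat :=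
  match a, b with Ls, Ls => 2 | Ls, _ => 3 | _, Ls => 3 | _, _ => 6 end.

Fixpoint sumN (f : nat -> nat) (n : nat) : nat :=
  match n with O => O | S n => (sumN f n + f n)%nat end.
Fixpoint sumR (f : nat -> R) (n : nat) : R :=
  match n with O => 0 | S n => sumR f n + f n end.

Definition ok (w : word) : bool :=
  let n := length w in
  let f m := nth m w Ls in
  if forallb (fun m => ssb (f m) (f (S m mod n))) (seq 0 n) then Nat.eqb n 6
  else andb (Nat.ltb n 6) (Nat.ltb 12 (sumN (fun m => ubn (f m) (f (S m mod n))) n)).

Fixpoint words (n : nat) : list word :=
  match n with O => nil :: nil
  | S n => flat_map (fun w => map (fun a => a :: w) (L1 :: Lr :: Ls :: nil)) (words n) end.

Lemma in_words w : In w (words (length w)).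
Proof.
  induction w as [|a w IH]; simpl; auto.
  apply in_flat_map. exists w. split; auto. destruct a; simpl; auto.
Qed.

Lemma check_all : forall n, (n <= 6)%nat ->
  forallb (fun w => implb (ok w) (cyc_in w)) (words n) = true.
Proof.
  intros n Hn.
  do 7 (destruct n as [|n]; [vm_compute; reflexivity|]). lia.
Qed.

Lemma ok_len w : ok w = true -> (length w <= 6)%nat.
Proof.
  unfold ok. destruct forallb.
  - intros H. apply Nat.eqb_eq in H. lia.
  - intros H. apply Bool.andb_true_iff in H as [H _]. apply Nat.ltb_lt in H. lia.
Qed.

Lemma ok_cyc w : ok w = true -> exists w', In w' allowed_words /\ cyc_equiv w w'.
Proof.
  intros H. apply cyc_in_sound.
  pose proof (check_all _ (ok_len w H)) as C.
  rewrite forallb_forall in C. specialize (C w (in_words w)).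
  rewrite H in C. exact C.
Qed.
Section Count.
Variables (g : nat -> R) (ss : nat -> bool) (ub : nat -> nat).
Hypothesis PIpos : 0 < PI.

Definition gprop (m : nat) : Prop :=
  PI/3 <= g m /\ (ss m = true -> g m = PI/3 /\ ub m = 2%nat) /\
  (ss m = false -> PI/3 < g m /\ g m < INR (ub m) * PI / 6).

Lemma sum_lo n : (forall m, (m < n)%nat -> gprop m) ->
  INR n * PI / 3 <= sumR g n /\ sumR g n <= INR (sumN ub n) * PI / 6 /\
  ((exists m, (m < n)%nat /\ ss m = false) ->
    INR n * PI / 3 < sumR g n /\ sumR g n < INR (sumN ub n) * PI / 6).
Proof.
  induction n as [|n IH]; intros H.
  - simpl. split; [lra|]. split; [lra|]. intros [m [Hm _]]; lia.
  - assert (IH' := IH (fun m Hm => H m ltac:(lia))).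
    destruct IH' as [A [B C]].
    destruct (H n ltac:(lia)) as [G1 [G2 G3]].
    simpl sumR; simpl sumN. rewrite S_INR, plus_INR.
    destruct (ss n) eqn:E.
    + destruct (G2 eq_refl) as [G4 G5]. rewrite G5. simpl (INR 2).
      split; [lra|]. split; [lra|].
      intros [m [Hm Hf]].
      assert (m < n)%nat. { destruct (Nat.eq_dec m n); [subst; congruence| lia]. }
      destruct (C (ex_intro _ m (conj H0 Hf))). lra.
    + destruct (G3 eq_refl) as [G4 G5].
      split; [lra|]. split; [lra|]. intros _. lra.
Qed.

Lemma forallb_false_ex (f : nat -> bool) l : forallb f l = false -> exists x, In x l /\ f x = false.
Proof.
  induction l as [|a l IH]; simpl; [discriminate|].
  destruct (f a) eqn:E; simpl; intros H.
  - destruct (IH H) as [x [? ?]]. eauto.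
  - eauto.
Qed.

Lemma count_lemma n : (forall m, (m < n)%nat -> gprop m) -> sumR g n = 2 * PI ->
  if forallb ss (seq 0 n) then n = 6%nat else (n < 6 /\ 12 < sumN ub n)%nat.
Proof.
  intros H Hs. destruct (sum_lo n H) as [A [B C]].
  destruct (forallb ss (seq 0 n)) eqn:E.
  - rewrite forallb_forall in E.
    assert (sumR g n = INR n * PI / 3).
    { clear A B C Hs. induction n as [|n IH]; [simpl; lra|].
      simpl sumR. rewrite IH; [| intros; apply H; lia | intros; apply E; rewrite in_seq in *; lia].
      rewrite S_INR. destruct (H n ltac:(lia)) as [_ [G _]].
      destruct (G (E n ltac:(rewrite in_seq; lia))). lra. }
    apply INR_eq. simpl. rewrite H0 in Hs.
    apply (Rmult_eq_reg_r (PI/3)); [|apply Rgt_not_eq; apply Rdiv_lt_0_compat; lra]. lra.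
  - destruct (forallb_false_ex _ _ E) as [m [Hm Hf]]. rewrite in_seq in Hm.
    assert (Hm' : (m < n)%nat) by lia.
    destruct (C (ex_intro _ m (conj Hm' Hf))) as [C1 C2].
    split.
    + apply INR_lt. simpl.
      apply (Rmult_lt_reg_r (PI/3)); [apply Rdiv_lt_0_compat; lra|]. lra.
    + apply INR_lt. simpl.
      apply (Rmult_lt_reg_r (PI/6)); [apply Rdiv_lt_0_compat; lra|]. lra.
Qed.
End Count.
Lemma PI3_pos : 0 < PI / 3. Proof. pose proof PI_RGT_0; lra. Qed.

Lemma cos_gt_of_lt g h : 0 < g -> g < h -> h <= PI -> cos h < cos g.
Proof. intros. apply cos_decreasing_1; lra. Qed.

Section G.
Variables (s x1 x2 g : R).
Hypotheses (Hs : 0 < s) (H1 : s <= x1) (H2 : s <= x2) (Hg0 : 0 < g) (HgP : g < PI).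
Hypothesis Heq : cos g * (2 * (s + x1) * (s + x2)) =
  (s + x1) ^ 2 + (s + x2) ^ 2 - (x1 + x2) ^ 2.

Lemma key_ineq : (x1 + x2) ^ 2 - (s + x1) ^ 2 - (s + x2) ^ 2 + (s + x1) * (s + x2)
  = 3 * (x1 - s) * (x2 - s) + 2 * s * ((x1 - s) + (x2 - s)).
Proof. ring. Qed.

Lemma gap_ge : PI / 3 <= g.
Proof.
  destruct (Rlt_or_le g (PI/3)) as [Hlt|]; [|assumption].
  exfalso. pose proof (cos_gt_of_lt g (PI/3) Hg0 Hlt ltac:(pose proof PI_RGT_0; lra)) as C.
  rewrite cos_PI3 in C. pose proof key_ineq.
  assert (0 <= (x1 - s) * (x2 - s)) by (apply Rmult_le_pos; lra).
  assert (0 < (s + x1) * (s + x2)) by (apply Rmult_lt_0_compat; lra).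
  assert (cos g * ((s + x1) * (s + x2)) > 1/2 * ((s + x1) * (s + x2))) by
    (apply Rmult_gt_compat_r; lra).
  nra.
Qed.

Lemma gap_gt : (s < x1 \/ s < x2) -> PI / 3 < g.
Proof.
  intros Hx. destruct (Rle_or_lt g (PI/3)) as [Hle|]; [|assumption].
  exfalso.
  assert (C : cos g >= 1/2).
  { destruct (Req_dec g (PI/3)) as [->|]; [rewrite cos_PI3; lra|].
    rewrite <- cos_PI3. left. apply cos_gt_of_lt; pose proof PI_RGT_0; lra. }
  pose proof key_ineq.
  assert (0 <= (x1 - s) * (x2 - s)) by (apply Rmult_le_pos; lra).
  assert (0 < (s + x1) * (s + x2)) by (apply Rmult_lt_0_compat; lra).
  assert (cos g * ((s + x1) * (s + x2)) >= 1/2 * ((s + x1) * (s + x2))) by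
    (apply Rmult_ge_compat_r; lra).
  nra.
Qed.

Lemma gap_eq : x1 = s -> x2 = s -> g = PI / 3.
Proof.
  intros -> ->.
  assert (cos g = 1/2).
  { apply (Rmult_eq_reg_r (8 * s * s)); [|nra]. nra. }
  destruct (Rtotal_order g (PI/3)) as [Hl|[He|Hl]]; auto; exfalso.
  - pose proof (cos_gt_of_lt g (PI/3) Hg0 Hl ltac:(pose proof PI_RGT_0; lra)).
    rewrite cos_PI3 in *. lra.
  - pose proof (cos_gt_of_lt (PI/3) g PI3_pos Hl ltac:(lra)).
    rewrite cos_PI3 in *. lra.
Qed.

Lemma gap_half : (x1 = s \/ x2 = s) -> g < PI / 2.
Proof.
  intros Hx.
  assert (Cp : 0 < cos g).
  { destruct Hx as [->| ->].
    - assert (cos g * (4 * s * (s + x2)) = 4 * s * s) by nra.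
      assert (0 < 4 * s * (s + x2)) by nra. nra.
    - assert (cos g * (4 * s * (s + x1)) = 4 * s * s) by nra.
      assert (0 < 4 * s * (s + x1)) by nra. nra. }
  destruct (Rlt_or_le g (PI/2)) as [|Hle]; [assumption|]. exfalso.
  destruct (Req_dec g (PI/2)) as [->|]; [rewrite cos_PI2 in Cp; lra|].
  pose proof (cos_gt_of_lt (PI/2) g ltac:(pose proof PI_RGT_0; lra) ltac:(lra) ltac:(lra)).
  rewrite cos_PI2 in *. lra.
Qed.
End G.

Lemma gap_letters (r s g : R) (a b : letter) :
  0 < s -> s < r -> r < 1 -> 0 < g -> g < PI ->
  cos g * (2 * (s + radius r s a) * (s + radius r s b)) =
  (s + radius r s a) ^ 2 + (s + radius r s b) ^ 2 - (radius r s a + radius r s b) ^ 2 ->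
  PI / 3 <= g /\ (ssb a b = true -> g = PI / 3 /\ ubn a b = 2%nat) /\
  (ssb a b = false -> PI / 3 < g /\ g < INR (ubn a b) * PI / 6).
Proof.
  intros Hs Hr H1 Hg0 HgP Heq.
  assert (Ra : s <= radius r s a) by (destruct a; simpl; lra).
  assert (Rb : s <= radius r s b) by (destruct b; simpl; lra).
  split; [apply (gap_ge s (radius r s a) (radius r s b) g); auto|].
  assert (HP := PI_RGT_0).
  split; intros E.
  - destruct a, b; try discriminate. split; [|reflexivity].
    apply (gap_eq s s s g); auto.
  - assert (Hgt : PI / 3 < g).
    { apply (gap_gt s (radius r s a) (radius r s b) g); auto. destruct a, b; try discriminate; simpl; lra. }
    split; [exact Hgt|].
    destruct a, b; try discriminate; simpl ubn; simpl INR; try lra.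
    all: apply (Rlt_le_trans _ (PI/2)); [|lra].
    all: match goal with Heq : cos _ * (2 * (_ + ?A) * (_ + ?B)) = _ |- _ =>
      apply (gap_half s A B g); auto; simpl; first [left; reflexivity | right; reflexivity] end.
Qed.

Lemma cos_law (a b d1 d2 t1 t2 e : R) : 0 <= e ->
  dist2 (a + d1 * cos t1, b + d1 * sin t1) (a + d2 * cos t2, b + d2 * sin t2) = e ->
  cos (t2 - t1) * (2 * d1 * d2) = d1 ^ 2 + d2 ^ 2 - e ^ 2.
Proof.
  unfold dist2; simpl fst; simpl snd. intros He H.
  set (z := (a + d1 * cos t1 - (a + d2 * cos t2)) ^ 2 + (b + d1 * sin t1 - (b + d2 * sin t2)) ^ 2) in H.
  assert (Hz0 : 0 <= z) by (unfold z; apply Rplus_le_le_0_compat; apply pow2_ge_0).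
  assert (Hze : z = e ^ 2) by (rewrite <- H; simpl; rewrite Rmult_1_r; rewrite sqrt_sqrt; auto).
  assert (C1 : cos t1 ^ 2 + sin t1 ^ 2 = 1) by (rewrite <- (sin2_cos2 t1); unfold Rsqr; ring).
  assert (C2 : cos t2 ^ 2 + sin t2 ^ 2 = 1) by (rewrite <- (sin2_cos2 t2); unfold Rsqr; ring).
  assert (Hz : z = d1 ^ 2 * (cos t1 ^ 2 + sin t1 ^ 2) + d2 ^ 2 * (cos t2 ^ 2 + sin t2 ^ 2)
     - 2 * d1 * d2 * (cos t2 * cos t1 + sin t2 * sin t1)) by (unfold z; ring).
  rewrite C1, C2 in Hz. rewrite cos_minus. rewrite <- Hze, Hz. ring.
Qed.

Theorem mainTheorem3 (r s : R) (I : Type) (c : I -> R * R) (k : I -> letter) :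
  0 < s -> s < r -> r < 1 ->
  is_compact_packing r s c k ->
  forall (i : I) (L : list I),
    k i = Ls ->
    is_corona r s c k i L ->
    exists w, In w allowed_words /\ cyc_equiv (coding k L) w.
Proof.
  intros Hs Hr H1 Hpack i L Hki Hcor.
  cbv zeta in Hcor.
  destruct Hcor as [Hnd [Htan [Hcons [th [Hpos [Hinc [Hn0 Hlast]]]]]]].
  unfold coding. apply ok_cyc.
  remember (length L) as n eqn:Hn.
  destruct n as [|p]; [lia|]. simpl pred in Hlast.
  set (g := fun m => if Nat.ltb (S m) (S p) then th (S m) - th m else th O + 2 * PI - th m).
  assert (Hpart : forall j, (j <= p)%nat -> sumR g j = th j - th O).
  { induction j as [|j IH]; intros Hj; simpl; [lra|].
    rewrite IH by lia. unfold g.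
    replace (Nat.ltb (S j) (S p)) with true by (symmetry; apply Nat.ltb_lt; lia). lra. }
  assert (Hsum : sumR g (S p) = 2 * PI).
  { simpl. rewrite Hpart by lia. unfold g. rewrite Nat.ltb_irrefl. lra. }
  assert (Hsi : radius r s (k i) = s) by (rewrite Hki; reflexivity).
  assert (Hprops : forall m, (m < S p)%nat ->
    gprop g (fun m => ssb (nth m (map k L) Ls) (nth (S m mod S p) (map k L) Ls))
            (fun m => ubn (nth m (map k L) Ls) (nth (S m mod S p) (map k L) Ls)) m).
  { intros m Hm. unfold gprop.
    assert (Hmod : (S m mod S p < S p)%nat) by (apply Nat.mod_upper_bound; lia).
    rewrite <- Hki, !map_nth.
    assert (HT := Hcons m ltac:(lia)). destruct HT as [_ HT].
    rewrite (Hpos m ltac:(lia)), (Hpos (S m mod S p) ltac:(lia)) in HT.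
    rewrite Hsi in HT.
    apply cos_law in HT; [| destruct (k (nth m L i)), (k (nth (S m mod S p) L i)); simpl; lra].
    assert (Hg : 0 < g m < PI /\ cos (g m) = cos (th (S m mod S p) - th m)).
    { destruct (Nat.eq_dec m p) as [->|Hne].
      - rewrite Nat.Div0.mod_same by lia. unfold g. rewrite Nat.ltb_irrefl.
        split; [lra|].
        replace (th O + 2 * PI - th p) with ((th O - th p) + 2 * PI) by ring.
        rewrite cos_plus, cos_2PI, sin_2PI. ring.
      - rewrite Nat.mod_small by lia. unfold g.
        replace (Nat.ltb (S m) (S p)) with true by (symmetry; apply Nat.ltb_lt; lia).
        specialize (Hinc m ltac:(lia)). split; [lra|reflexivity]. }
    destruct Hg as [Hg Hc]. rewrite <- Hc in HT.
    apply gap_letters with (r := r) (s := s); auto; lra. }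
  pose proof (count_lemma g _ _ PI_RGT_0 (S p) Hprops Hsum) as CL.
  unfold ok. cbv zeta. rewrite length_map, <- Hn.
  destruct (forallb _ _).
  - apply Nat.eqb_eq; exact CL.
  - destruct CL as [C1 C2]. apply Bool.andb_true_iff. split; apply Nat.ltb_lt; auto.
Qed.
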